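(* Let $(\lambda,\nu,s)$ be a co-Pieri triple and let $n$ be sufficiently large compared with $r=|\lambda|+s$. For every partition $\alpha\vdash n-s$ with $\alpha\subseteq\lambda_{[n]}\cap\nu_{[n]}$, every element of $\mathrm{Std}_s(\nu_{[n]}\setminus\alpha)$ has the form $\mathsf p=(-\varepsilon_0,+\varepsilon_{j_1},\dots,-\varepsilon_0,+\varepsilon_{j_s})$ and every element of $\mathrm{Std}_s(\alpha\setminus\lambda_{[n]})$ has the form $\mathsf q=(-\varepsilon_{i_1},+\varepsilon_0,\dots,-\varepsilon_{i_s},+\varepsilon_0)$, with all $i_l,j_l\ge1$, and the rule $$\varphi_s(\mathsf p,\mathsf q)=(-\varepsilon_{i_1-1},+\varepsilon_{j_1-1},-\varepsilon_{i_2-1},+\varepsilon_{j_2-1},\dots,-\varepsilon_{i_s-1},+\varepsilon_{j_s-1})$$ defines a bijection $$\varphi_s:\bigsqcup_{\substack{\alpha\vdash n-s\\ \alpha\subseteq\lambda_{[n]}\cap\nu_{[n]}}}\mathrm{Std}_s(\nu_{[n]}\setminus\alpha)\times\mathrm{Std}_s(\alpha\setminus\lambda_{[n]})\longrightarrow\mathrm{Std}^+_s(\nu\setminus\lambda).$$ Moreover, for every $\mathsf u=\varphi_s(\mathsf p,\mathsf q)\in\mathrm{Std}^+_s(\nu\setminus\lambda)$ and every $1\le k\le s-1$, the tableaux $\mathsf p_{k\leftrightarrow k+1},\mathsf q_{k\leftrightarrow k+1}$ exist and $\varphi_s(\mathsf p_{k\leftrightarrow k+1},\mathsf q_{k\leftrightarrow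 k+1})=\mathsf u_{k\leftrightarrow k+1}\in\mathrm{Std}^+_s(\nu\setminus\lambda)$; hence $\mathsf u_{k\leftrightarrow k+1}$ exists for every $\mathsf u\in\mathrm{Std}^0_s(\nu\setminus\lambda)$ and every $1\le k\le s-1$.
   Context: For a partition $\lambda$: $|\lambda|$ size, $\ell(\lambda)$ number of nonzero parts; $\lambda_{[n]}=(n-|\lambda|,\lambda_1,\lambda_2,\dots)$. $\lambda\cap\nu$ is the componentwise minimum; for $\alpha\subseteq\beta$, $\beta\ominus\alpha$ is the difference of Young diagrams. $\pm\varepsilon_i$ ($i\ge1$) adds/removes a box in row $i$, $\varepsilon_0=0$. For partitions $\lambda,\nu$ and $s\ge0$ with $|\nu|\le|\lambda|+s$, $\mathrm{Std}_s(\nu\setminus\lambda)$ is the set of sequences $\mathsf t=(-\varepsilon_{i_1},+\varepsilon_{j_1},\dots,-\varepsilon_{i_s},+\varepsilon_{j_s})$, $i_k,j_k\ge0$, such that with $\mathsf t(0)=\lambda$, $\mathsf t(k-\frac12)=\mathsf t(k-1)-\varepsilon_{i_k}$, $\mathsf t(k)=\mathsf t(k-\frac12)+\varepsilon_{j_k}$ all are partitions and $\mathsf t(s)=\nu$; $(-\varepsilon_{i_k},+\varepsilon_{j_k})$ is the $k$-th integral step. $\mathrm{Std}^+_s(\nu\setminus\lambda)$ is the subset with $\#\{k:i_k=i\}\le\lambda_i$ for all $i\ge1$; $\mathrm{Std}^0_s(\nu\setminus\lambda)$ is the subset of $\mathrm{Std}^+_s(\nu\setminus\lambda)$ of those with no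 integral step $(-\varepsilon_0,+\varepsilon_0)$. $\mathsf t_{k\leftrightarrow k+1}$ is obtained by interchanging the $k$-th and $(k+1)$-th integral steps; it exists if it again lies in $\mathrm{Std}_s$ of the same shape. A co-Pieri triple is $(\lambda,\nu,s)$ with $|\nu|\le|\lambda|+s$, $\mathrm{Std}^0_s(\nu\setminus\lambda)\ne\emptyset$ and: $s=1$, or $s>1$ and, if $\max\{\ell(\lambda),\ell(\nu)\}\ge2$, $s\le\max\{|\lambda\ominus(\lambda\cap\nu)|,|\nu\ominus(\lambda\cap\nu)|\}+\min_{2\le i\le\max\{\ell(\lambda),\ell(\nu)\}}(\min\{\lambda_{i-1},\nu_{i-1}\}-\max\{\lambda_i,\nu_i\})$. *)

(* Defs.v *)
From mathcomp Require Import all_boot all_order all_algebra.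
Set Implicit Arguments. Unset Strict Implicit. Unset Printing Implicit Defensive.
Import Order.TTheory GRing.Theory Num.Theory.

(* A partition is a weakly decreasing finite sequence of positive integers
   (canonical representation: no trailing zeros).  lambda_i = nth 0 la i.-1. *)
Definition is_part (la : seq nat) : bool :=
  sorted geq la && all (fun x => 0 < x) la.

Definition row (la : seq nat) (i : nat) : nat := nth 0 la i.-1.

Definition part_n (n : nat) (la : seq nat) : seq nat := (n - sumn la) :: la.

Definition pcontained (al be : seq nat) : Prop :=
  forall i, (nth 0 al i <= nth 0 be i)%N.

Definition pmeet (la nu : seq nat) : seq nat :=
  [seq minn (nth 0 la i) (nth 0 nu i) | i <- iota 0 (minn (size la) (size nu))].

(* |beta \ominus alpha| for alpha = la \cap nu, beta = la *)
Definition skew_diff_size (la nu : seq nat) : nat :=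
  \sum_(i < maxn (size la) (size nu)) (nth 0 la i - minn (nth 0 la i) (nth 0 nu i)).

(* An integral step (-eps_i, +eps_j) is encoded as the pair (i, j);
   index 0 stands for eps_0 = 0. *)
Definition step := (nat * nat)%type.

Definition n_add (t : seq step) (k i : nat) : nat :=
  count (fun st : step => st.2 == i) (take k t).
Definition n_rem (t : seq step) (k i : nat) : nat :=
  count (fun st : step => st.1 == i) (take k t).

(* row i (i >= 1) of t(k), starting from t(0) = la *)
Definition shape_at (la : seq nat) (t : seq step) (k i : nat) : int :=
  (Posz (row la i) + Posz (n_add t k i) - Posz (n_rem t k i))%R.
(* row i (i >= 1) of t(k - 1/2) = t(k-1) - eps_{i_k} *)
Definition shape_half (la : seq nat) (t : seq step) (k i : nat) : int :=
  (Posz (row la i) + Posz (n_add t k.-1 i) - Posz (n_rem t k i))%R.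

Definition is_partition_rows (f : nat -> int) : Prop :=
  forall i, (1 <= i)%N -> (0 <= f i)%R /\ (f i.+1 <= f i)%R.

Definition Std (s : nat) (la nu : seq nat) (t : seq step) : Prop :=
  [/\ (sumn nu <= sumn la + s)%N, size t = s,
      (forall k, (1 <= k <= s)%N ->
         is_partition_rows (shape_half la t k) /\ is_partition_rows (shape_at la t k))
    & (forall i, (1 <= i)%N -> shape_at la t s i = Posz (row nu i))].

Definition Std_plus (s : nat) (la nu : seq nat) (t : seq step) : Prop :=
  Std s la nu t /\
  (forall i, (1 <= i)%N -> (count (fun st : step => st.1 == i) t <= row la i)%N).

Definition Std_zero (s : nat) (la nu : seq nat) (t : seq step) : Prop :=
  Std_plus s la nu t /\ (0, 0) \notin t.

(* t_{k <-> k+1}: interchange the k-th and (k+1)-th integral steps (1-indexed) *)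
Definition swap_steps (k : nat) (t : seq step) : seq step :=
  set_nth (0, 0) (set_nth (0, 0) t k.-1 (nth (0, 0) t k)) k (nth (0, 0) t k.-1).

Definition gap (la nu : seq nat) (i : nat) : int :=
  (Posz (minn (row la i.-1) (row nu i.-1)) - Posz (maxn (row la i) (row nu i)))%R.
Definition min_gap (la nu : seq nat) : int :=
  let L := maxn (size la) (size nu) in
  \big[Order.min/gap la nu 2]_(2 <= i < L.+1) gap la nu i.

Definition coPieri (la nu : seq nat) (s : nat) : Prop :=
  [/\ (sumn nu <= sumn la + s)%N,
      (exists t, Std_zero s la nu t)
    & (s = 1%N \/
       ((1 < s)%N /\
        ((2 <= maxn (size la) (size nu))%N ->
         (Posz s <= Posz (maxn (skew_diff_size la nu) (skew_diff_size nu la))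
                  + min_gap la nu)%R)))].

Definition phi (p q : seq step) : seq step :=
  [seq (x.2.1.-1, x.1.2.-1) | x <- zip p q].

(* the disjoint union indexing set: triples (alpha, p, q) *)
Definition phi_dom (n s : nat) (la nu : seq nat) (x : seq nat * seq step * seq step)
  : Prop :=
  let: (al, p, q) := x in
  [/\ is_part al, sumn al = (n - s)%N,
      pcontained al (pmeet (part_n n la) (part_n n nu)),
      Std s al (part_n n nu) p & Std s (part_n n la) al q].

(* Main.v *)
Require Import Defs.
From mathcomp Require Import all_boot all_order all_algebra.
From mathcomp Require Import zify.

Module Helpers.
Import Order.TTheory GRing.Theory Num.Theory.
Set Implicit Arguments. Unset Strict Implicit.
Import Defs.

Lemma count_take_le (T : Type) (P : pred T) k (t : seq T) :
  count P (take k t) <= count P t.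
Proof. by rewrite -{2}(cat_take_drop k t) count_cat leq_addr. Qed.

Lemma sum_ind_le (x M : nat) :
  \sum_(i < M) (x == i.+1 : nat) = (0 < x <= M).
Proof.
elim: M => [|M IH]; first by rewrite big_ord0; case: x => [|x] //=; rewrite ltn0 andbF.
rewrite big_ord_recr /= IH; case: x IH => [|x] _ //=.
rewrite eqSS !ltnS; case: (ltngtP x M) => //= h; lia.
Qed.

Lemma sum_count (T : Type) (f : T -> nat) (t : seq T) M :
  \sum_(i < M) count (fun st => f st == i.+1) t = count (fun st => 0 < f st <= M) t.
Proof.
elim: t => [|x t IH] /=; first by rewrite big1.
by rewrite big_split /= IH sum_ind_le.
Qed.

Lemma sumn_nth (s : seq nat) M : size s <= M -> \sum_(i < M) nth 0 s i = sumn s.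
Proof.
elim: s M => [|x s IH] M.
  by move=> _; rewrite big1 // => i _; rewrite nth_nil.
case: M => [|M] //=; rewrite ltnS => h; by rewrite big_ord_recl /= IH.
Qed.

Lemma sumn_le_nth (a b : seq nat) : (forall j, nth 0 a j <= nth 0 b j) -> sumn a <= sumn b.
Proof.
move=> h; rewrite -(@sumn_nth a (size a + size b)) ?leq_addr //.
rewrite -(@sumn_nth b (size a + size b)) ?leq_addl //.
by apply: leq_sum => i _.
Qed.

Lemma sum_one_le (g : nat -> nat) L a : a < L -> g a <= \sum_(j < L) g j.
Proof.
elim: L => [|L IH] //; rewrite ltnS leq_eqVlt big_ord_recr /= => /orP[/eqP->|/IH h].
  by rewrite leq_addl.
by apply: leq_trans h _; rewrite leq_addr.
Qed.

Lemma sum_two_le (g : nat -> nat) L a : a.+1 < L -> g a + g a.+1 <= \sum_(j < L) g j.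
Proof.
elim: L => [|L IH] //; rewrite ltnS leq_eqVlt big_ord_recr /= => /orP[/eqP h|/IH h].
  by rewrite -h leq_add2r sum_one_le // -h.
by apply: leq_trans h _; rewrite leq_addr.
Qed.

Definition At (t : seq step) i := count (fun st : step => st.2 == i) t.
Definition Ct (t : seq step) i := count (fun st : step => st.1 == i) t.

Lemma final_nat la nu (t : seq step) :
  (forall i, 1 <= i -> shape_at la t (size t) i = Posz (row nu i)) ->
  forall i, 1 <= i -> row nu i + Ct t i = row la i + At t i.
Proof. by move=> h i hi; have := h i hi; rewrite /shape_at /n_add /n_rem take_size /Ct /At; lia. Qed.

Lemma le_sum_seq (T : eqType) (f : T -> nat) (t : seq T) x : x \in t -> f x <= \sum_(y <- t) f y.
Proof.
elim: t => [|y t IH] //; rewrite inE big_cons => /orP[/eqP->|/IH h]; first by rewrite leq_addr.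
by apply: leq_trans h _; rewrite leq_addl.
Qed.

Lemma ID la nu (t : seq step) :
  (forall i, 1 <= i -> shape_at la t (size t) i = Posz (row nu i)) ->
  sumn nu + count (fun st : step => st.1 != 0) t = sumn la + count (fun st : step => st.2 != 0) t.
Proof.
move=> /final_nat h.
set M := size la + size nu + \sum_(st <- t) (st.1 + st.2).
have hb : forall st, st \in t -> (st.1 <= M) && (st.2 <= M).
  move=> st /(le_sum_seq (fun st : step => st.1 + st.2)) /= hs.
  by apply/andP; split; apply: leq_trans (leq_trans _ hs) (leq_addl _ _); rewrite ?leq_addr ?leq_addl.
have e : \sum_(i < M) (row nu i.+1 + Ct t i.+1) = \sum_(i < M) (row la i.+1 + At t i.+1).
  by apply: eq_bigr => i _; apply: h.
rewrite !big_split /= in e.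
rewrite (@sumn_nth nu M) ?(@sumn_nth la M) /M in e; try lia.
rewrite /Ct /At !sum_count in e.
have -> : count (fun st : step => st.1 != 0) t = count (fun st : step => 0 < st.1 <= M) t.
  by apply: eq_in_count => st /hb /andP[h1 h2]; rewrite h1 andbT lt0n.
have -> : count (fun st : step => st.2 != 0) t = count (fun st : step => 0 < st.2 <= M) t.
  by apply: eq_in_count => st /hb /andP[h1 h2]; rewrite h2 andbT lt0n.
exact: e.
Qed.

Lemma part_nth x : is_part x -> forall i, nth 0 x i.+1 <= nth 0 x i.
Proof.
case/andP=> hs _ i; case: (ltnP i.+1 (size x)) => h; last by rewrite nth_default.
have := @sorted_leq_nth _ geq _ _ 0 x hs i i.+1; apply => //; rewrite ?inE //; try lia.
  by move=> a b c /= h1 h2; apply: leq_trans h2 h1.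
by move=> a /=.
Qed.

Lemma part_pos x i : is_part x -> i < size x -> 0 < nth 0 x i.
Proof. by case/andP=> _ /allP h hi; apply/h/mem_nth. Qed.

Lemma part_rows x : is_part x -> is_partition_rows (fun i => Posz (row x i)).
Proof. move=> hx i hi; split => //; case: i hi => // i _; rewrite /row /= lez_nat; exact: part_nth. Qed.

Lemma part_rows_shift x : is_part x -> is_partition_rows (fun i => Posz (row x i.+1)).
Proof. move=> hx i hi; split => //; rewrite /row /= lez_nat; exact: part_nth. Qed.

Lemma part_eq a b : is_part a -> is_part b -> (forall i, nth 0 a i = nth 0 b i) -> a = b.
Proof.
move=> ha hb h.
have hs : size a = size b.
  apply/eqP; rewrite eqn_leq; apply/andP; split; rewrite leqNgt; apply/negP => hl.
    by have := part_pos ha hl; rewrite h nth_default.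
  by have := part_pos hb hl; rewrite -h nth_default.
by apply: (eq_from_nth (x0 := 0)) => // i _; apply: h.
Qed.

Fixpoint mkp (f : nat -> nat) (k : nat) : seq nat :=
  if k is k'.+1 then (if f 0 == 0 then [::] else f 0 :: mkp (fun i => f i.+1) k') else [::].

Lemma dec_le (f : nat -> nat) : (forall i, f i.+1 <= f i) -> forall i j, i <= j -> f j <= f i.
Proof.
move=> h i j /subnK <-; elim: (j - i) => [|d IH] //; apply: leq_trans IH; exact: h.
Qed.

Lemma mkp_spec (f : nat -> nat) M : (forall i, f i.+1 <= f i) -> f M = 0 ->
  is_part (mkp f M) /\ forall i, nth 0 (mkp f M) i = f i.
Proof.
elim: M f => [|M IH] f hd hM /=.
  split => // i; rewrite nth_nil; apply/esym/eqP; rewrite -leqn0 -hM; exact: dec_le.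
case: eqP => [h0|hn0].
  split => // i; rewrite nth_nil; apply/esym/eqP; rewrite -leqn0 -h0; exact: dec_le.
have [hp hn] := IH (fun i => f i.+1) (fun i => hd i.+1) hM.
split; last by case.
move: hp; case/andP => hs hpos; apply/andP; split.
  case E: (mkp (fun i => f i.+1) M) hs => [|y r] //= ->; rewrite andbT.
  by have := hn 0; rewrite E /= => ->; apply: hd.
by rewrite /= hpos andbT lt0n; apply/eqP.
Qed.

Lemma nth_pmeet a b i : nth 0 (pmeet a b) i = minn (nth 0 a i) (nth 0 b i).
Proof.
rewrite /pmeet; case: (ltnP i (minn (size a) (size b))) => h.
  by rewrite (nth_map 0) ?size_iota // nth_iota.
rewrite nth_default ?size_map ?size_iota //.
move: h; rewrite geq_min => /orP[h|h]; rewrite (nth_default 0 h); lia.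
Qed.

Lemma set_nth_catl (T : Type) (x0 : T) a b i v :
  set_nth x0 (a ++ b) (size a + i) v = a ++ set_nth x0 b i v.
Proof. by elim: a => [|z a IH] //=; rewrite IH. Qed.

Lemma swap_cat (a b : seq step) x y :
  swap_steps (size a).+1 (a ++ x :: y :: b) = a ++ y :: x :: b.
Proof.
rewrite /swap_steps /=.
have e1 : nth (0,0) (a ++ [:: x, y & b]) (size a).+1 = y by rewrite nth_cat ltnNge leqnSn /= subSnn.
have e2 : nth (0,0) (a ++ [:: x, y & b]) (size a) = x by rewrite nth_cat ltnn subnn.
rewrite e1 e2 -[size a]addn0 set_nth_catl /= addn0 -addn1 set_nth_catl.
by [].
Qed.

Lemma swap_decomp (t : seq step) k : 1 <= k -> k < size t ->
  exists a x y b, size a = k.-1 /\ t = a ++ x :: y :: b.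
Proof.
move=> hk hks; exists (take k.-1 t), (nth (0,0) t k.-1), (nth (0,0) t k), (drop k.+1 t).
rewrite size_take; split; first by case: ltnP => //; lia.
rewrite -{1}(cat_take_drop k.-1 t) (drop_nth (0,0)); last exact: leq_ltn_trans (leq_pred _) hks.
rewrite (drop_nth (0,0) (n := k.-1.+1)); last by rewrite prednK.
by rewrite prednK.
Qed.

Lemma perm_swap (t : seq step) k : 1 <= k -> k < size t -> perm_eq (swap_steps k t) t.
Proof.
move=> h1 h2; have [a [x [y [b [ha ->]]]]] := swap_decomp h1 h2.
rewrite -(prednK h1) -ha swap_cat perm_cat2l.
by rewrite -[y :: x :: b]/([:: y; x] ++ b) -[x :: y :: b]/([:: x; y] ++ b) perm_cat2r; apply/permP => P /=; lia.
Qed.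

Lemma size_swap (t : seq step) k : 1 <= k -> k < size t -> size (swap_steps k t) = size t.
Proof. by move=> h1 h2; apply: perm_size; apply: perm_swap. Qed.

Lemma size_phi p q : size (phi p q) = minn (size p) (size q).
Proof. by rewrite /phi size_map size_zip. Qed.

Lemma phi_cat a a' b b' : size a = size a' -> phi (a ++ b) (a' ++ b') = phi a a' ++ phi b b'.
Proof. by move=> h; rewrite /phi zip_cat // map_cat. Qed.

Lemma phi_swap p q k : size p = size q -> 1 <= k -> k < size p ->
  phi (swap_steps k p) (swap_steps k q) = swap_steps k (phi p q).
Proof.
move=> hs h1 h2.
have [a [x [y [b [ha ->]]]]] := swap_decomp h1 h2.
have h2' : k < size q by rewrite -hs.
have [a' [x' [y' [b' [ha' ->]]]]] := swap_decomp h1 h2'.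
have hk : k = (size a).+1 by rewrite ha prednK.
have hk' : k = (size a').+1 by rewrite ha' prednK.
have haa : size a = size a' by rewrite ha ha'.
rewrite {1}hk swap_cat {1}hk' swap_cat !phi_cat //.
have -> : k = (size (phi a a')).+1 by rewrite size_phi -haa minnn.
by rewrite swap_cat.
Qed.

Lemma nth_phi p q i : size p = size q -> i < size p ->
  nth (0,0) (phi p q) i = ((nth (0,0) q i).1.-1, (nth (0,0) p i).2.-1).
Proof.
move=> hs hi; rewrite /phi (nth_map ((0,0),(0,0))) ?size_zip ?hs ?minnn -?hs //.
by rewrite nth_zip.
Qed.

Lemma count_phi_snd p q k (P : pred nat) : size p = size q ->
  count (fun st : step => P st.2) (take k (phi p q)) = count (fun st : step => P st.2.-1) (take k p).
Proof.
move=> hs; rewrite /phi -map_take count_map.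
have -> : take k (zip p q) = zip (take k p) (take k q).
  by elim: p q k hs => [|x p IH] [|y q] [|k] //= [/IH ->].
rewrite -[in RHS](@unzip1_zip _ _ (take k p) (take k q)) ?size_take ?hs //.
by rewrite count_map.
Qed.

Lemma count_phi_fst p q k (P : pred nat) : size p = size q ->
  count (fun st : step => P st.1) (take k (phi p q)) = count (fun st : step => P st.1.-1) (take k q).
Proof.
move=> hs; rewrite /phi -map_take count_map.
have -> : take k (zip p q) = zip (take k p) (take k q).
  by elim: p q k hs => [|x p IH] [|y q] [|k] //= [/IH ->].
rewrite -[in RHS](@unzip2_zip _ _ (take k p) (take k q)) ?size_take ?hs //.
by rewrite count_map.
Qed.

Lemma min_gap_le la nu j : 2 <= j <= maxn (size la) (size nu) ->
  (min_gap la nu <= gap la nu j)%R.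
Proof.
move=> hj; rewrite /min_gap; apply: (@ge_bigmin_seq _ _ _ _ _ j) => //.
by rewrite mem_index_iota ltnS.
Qed.

Lemma skew_eq la nu (t : seq step) (f g : seq step -> nat -> nat) :
  (forall r, 1 <= r -> row nu r + f t r = row la r + g t r) ->
  skew_diff_size la nu = \sum_(j < maxn (size la) (size nu)) (f t j.+1 - minn (f t j.+1) (g t j.+1)).
Proof.
move=> h; rewrite /skew_diff_size; apply: eq_bigr => j _.
have := h j.+1 (ltn0Sn _); rewrite /row /=; lia.
Qed.

Lemma skew_bound la nu (t : seq step) (f g : seq step -> nat -> nat) i :
  (forall r, 1 <= r -> row nu r + f t r = row la r + g t r) ->
  \sum_(j < maxn (size la) (size nu)) f t j.+1 <= size t ->
  1 <= i -> i < maxn (size la) (size nu) ->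
  skew_diff_size la nu + minn (f t i) (g t i) + minn (f t i.+1) (g t i.+1) <= size t.
Proof.
move=> h hs hi hiL; rewrite (skew_eq h) -addnA.
set L := maxn _ _.
have := @sum_two_le (fun j => minn (f t j.+1) (g t j.+1)) L i.-1; rewrite prednK // => /(_ hiL) h2.
apply: leq_trans hs; apply: leq_trans (leq_add (leqnn _) h2) _.
rewrite -big_split /=; apply: leq_sum => j _ /=; by rewrite subnK // geq_minl.
Qed.

Lemma sumC_le (t : seq step) L : \sum_(j < L) Ct t j.+1 <= size t.
Proof. by rewrite /Ct (sum_count (fun st : step => st.1)) count_size. Qed.
Lemma sumA_le (t : seq step) L : \sum_(j < L) At t j.+1 <= size t.
Proof. by rewrite /At (sum_count (fun st : step => st.2)) count_size. Qed.

Lemma core_G la nu (t : seq step) :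
  ((2 <= maxn (size la) (size nu))%N ->
   (Posz (size t) <= Posz (maxn (skew_diff_size la nu) (skew_diff_size nu la)) + min_gap la nu)%R) ->
  (forall i, 1 <= i -> shape_at la t (size t) i = Posz (row nu i)) ->
  (forall i, 1 <= i -> Ct t i <= row la i) ->
  forall i, 1 <= i -> row nu i.+1 + Ct t i.+1 <= row la i - Ct t i.
Proof.
move=> hcp hfin hc i hi.
have hf := final_nat hfin.
have hfi := hf i hi; have hfi1 := hf i.+1 (ltn0Sn _); have hci := hc i hi; have hci1 := hc i.+1 (ltn0Sn _).
case: (ltnP i (maxn (size la) (size nu))) => hL; last first.
  have e1 : row la i.+1 = 0 by rewrite /row /= nth_default //; apply: leq_trans hL; apply: leq_maxl.
  have e2 : row nu i.+1 = 0 by rewrite /row /= nth_default //; apply: leq_trans hL; apply: leq_maxr.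
  lia.
have h2 : 2 <= maxn (size la) (size nu) by lia.
have hs := hcp h2.
have hg := @min_gap_le la nu i.+1; rewrite ltnS hL /= in hg; have {hg} hg := hg (introT andP (conj hi isT)).
have b1 := @skew_bound la nu t (fun t r => Ct t r) (fun t r => At t r) i hf (sumC_le _ _) hi hL.
have hf' : forall r, 1 <= r -> row la r + At t r = row nu r + Ct t r by move=> r /hf ->.
have b2 := @skew_bound nu la t (fun t r => At t r) (fun t r => Ct t r) i hf'.
rewrite maxnC in b2; have {b2} b2 := b2 (sumA_le _ _) hi hL.
move: hg; rewrite /gap /= => hg.
simpl in b1, b2.
lia.
Qed.

Lemma VT la nu (t : seq step) :
  (forall i, 1 <= i -> row nu i.+1 + Ct t i.+1 <= row la i - Ct t i) ->
  (forall i, 1 <= i -> shape_at la t (size t) i = Posz (row nu i)) ->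
  (forall i, 1 <= i -> Ct t i <= row la i) ->
  forall a c : nat -> nat, (forall i, 1 <= i -> a i <= At t i) -> (forall i, 1 <= i -> c i <= Ct t i) ->
  is_partition_rows (fun i => (Posz (row la i) + Posz (a i) - Posz (c i))%R).
Proof.
move=> hG hfin hc a c ha hcc i hi.
have hf := final_nat hfin.
have := hG i hi; have := hf i.+1 (ltn0Sn _); have := hc i hi; have := ha i.+1 (ltn0Sn _);
have := hcc i hi; have := hcc i.+1 (ltn0Sn _); have := ha i hi.
move=> *; split; lia.
Qed.

Definition gapc (la nu : seq nat) (s : nat) : Prop :=
  (2 <= maxn (size la) (size nu))%N ->
  (Posz s <= Posz (maxn (skew_diff_size la nu) (skew_diff_size nu la)) + min_gap la nu)%R.

Definition VTprop (la : seq nat) (t : seq step) : Prop :=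
  forall a c : nat -> nat, (forall i, 1 <= i -> a i <= At t i) -> (forall i, 1 <= i -> c i <= Ct t i) ->
  is_partition_rows (fun i => (Posz (row la i) + Posz (a i) - Posz (c i))%R).

Lemma ipr_ext (f g : nat -> int) : (forall i, 1 <= i -> f i = g i) ->
  is_partition_rows f -> is_partition_rows g.
Proof. by move=> e h i hi; rewrite -!e //; apply: h. Qed.

Lemma nadd_le (t : seq step) k i : n_add t k i <= At t i.
Proof. exact: count_take_le. Qed.
Lemma nrem_le (t : seq step) k i : n_rem t k i <= Ct t i.
Proof. exact: count_take_le. Qed.

Lemma std_from la nu s (t : seq step) :
  (sumn nu <= sumn la + s) -> size t = s ->
  (forall i, 1 <= i -> shape_at la t (size t) i = Posz (row nu i)) ->
  VTprop la t -> Std s la nu t.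
Proof.
move=> hsum hs hfin hvt; split => //; last by rewrite -hs.
move=> k hk; split.
  by apply: (hvt (fun i => n_add t k.-1 i) (fun i => n_rem t k i)) => i _; [apply: nadd_le|apply: nrem_le].
by apply: (hvt (fun i => n_add t k i) (fun i => n_rem t k i)) => i _; [apply: nadd_le|apply: nrem_le].
Qed.

Lemma At_perm (t t' : seq step) i : perm_eq t' t -> At t' i = At t i.
Proof. by move=> /permP h; apply: h. Qed.
Lemma Ct_perm (t t' : seq step) i : perm_eq t' t -> Ct t' i = Ct t i.
Proof. by move=> /permP h; apply: h. Qed.

Lemma final_perm la nu (t t' : seq step) : perm_eq t' t ->
  (forall i, 1 <= i -> shape_at la t (size t) i = Posz (row nu i)) ->
  (forall i, 1 <= i -> shape_at la t' (size t') i = Posz (row nu i)).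
Proof.
move=> hp hf i hi; rewrite -hf // /shape_at /n_add /n_rem !take_size.
have := At_perm i hp; have := Ct_perm i hp; rewrite /At /Ct => -> ->; reflexivity.
Qed.

Lemma VT_of la nu s (t : seq step) : gapc la nu s -> size t = s ->
  (forall i, 1 <= i -> shape_at la t (size t) i = Posz (row nu i)) ->
  (forall i, 1 <= i -> Ct t i <= row la i) -> VTprop la t.
Proof.
move=> hg hs hfin hc; apply: (VT _ hfin hc); apply: core_G => //; by rewrite hs.
Qed.

Lemma VT_perm la (t t' : seq step) : perm_eq t' t -> VTprop la t -> VTprop la t'.
Proof.
move=> hp hv a c ha hc; apply: hv => i hi; [rewrite -(At_perm i hp)|rewrite -(Ct_perm i hp)]; auto.
Qed.

Lemma stdplus_perm la nu s (t t' : seq step) : gapc la nu s ->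
  (sumn nu <= sumn la + s) -> size t = s ->
  (forall i, 1 <= i -> shape_at la t (size t) i = Posz (row nu i)) ->
  (forall i, 1 <= i -> Ct t i <= row la i) -> perm_eq t' t -> Std_plus s la nu t'.
Proof.
move=> hg hsum hs hfin hc hp; split.
  apply: std_from => //; first by rewrite (perm_size hp).
    exact: final_perm hfin.
  by apply: (VT_perm hp); apply: (VT_of hg hs hfin hc).
by move=> i hi; have := Ct_perm i hp; rewrite /Ct => ->; apply: hc.
Qed.

Lemma std1 la nu (t : seq step) : size t = 1 -> (sumn nu <= sumn la + 1) -> is_part nu ->
  (forall i, 1 <= i -> shape_at la t (size t) i = Posz (row nu i)) ->
  is_partition_rows (fun i => (Posz (row la i) - Posz (Ct t i))%R) -> Std 1 la nu t.
Proof.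
move=> hs hsum hnu hfin hp; split => //; last by move=> i hi; rewrite -hfin // hs.
move=> k /andP[h1 h2].
have -> : k = 1 by apply/eqP; rewrite eqn_leq h1 h2.
split.
  apply: ipr_ext hp => i hi; rewrite /shape_half /n_add /n_rem /= -hs take_size /Ct.
  by rewrite take0 /= addr0.
by apply: ipr_ext (part_rows hnu) => i hi; rewrite -hfin // hs.
Qed.

Lemma row_pn1 n x : row (part_n n x) 1 = n - sumn x. Proof. by []. Qed.
Lemma row_pnS n x i : 1 <= i -> row (part_n n x) i.+1 = row x i.
Proof. by case: i. Qed.
Lemma sumn_pn n x : sumn x <= n -> sumn (part_n n x) = n.
Proof. by rewrite /part_n /= => h; rewrite subnK. Qed.
Lemma row1_le x : row x 1 <= sumn x.
Proof. by case: x => //= a x; rewrite leq_addr. Qed.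

Lemma count_all0 (T : eqType) (P : pred T) (t : seq T) : count P t = 0 -> forall x, x \in t -> ~~ P x.
Proof.
move=> h x hx; apply/negP => hp.
have : 0 < count P t by rewrite -has_count; apply/hasP; exists x.
by rewrite h.
Qed.

Lemma count_allS (T : eqType) (P : pred T) (t : seq T) : count P t = size t -> forall x, x \in t -> P x.
Proof. by move=> h; apply/allP; rewrite all_count h. Qed.

Lemma shape_p s al nu' (p : seq step) n : Std s al nu' p -> sumn al = n - s -> sumn nu' = n -> s <= n ->
  forall st, st \in p -> st.1 = 0 /\ 1 <= st.2.
Proof.
case=> _ hs _ hfin hal hnu hsn.
have := @ID al nu' p; rewrite hs => /(_ hfin); rewrite hal hnu.
have := count_size (fun st : step => st.2 != 0) p; rewrite hs => hA e.
have hR : count (fun st : step => st.1 != 0) p = 0 by lia.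
have hA' : count (fun st : step => st.2 != 0) p = size p by lia.
move=> st hst; split.
  by apply/eqP; have := count_all0 hR hst; rewrite negbK.
by rewrite lt0n; apply: (count_allS hA').
Qed.

Lemma shape_q s la' al (q : seq step) n : Std s la' al q -> sumn la' = n -> sumn al = n - s -> s <= n ->
  forall st, st \in q -> 1 <= st.1 /\ st.2 = 0.
Proof.
case=> _ hs _ hfin hla hal hsn.
have := @ID la' al q; rewrite hs => /(_ hfin); rewrite hal hla.
have := count_size (fun st : step => st.1 != 0) q; rewrite hs => hA e.
have hR : count (fun st : step => st.2 != 0) q = 0 by lia.
have hA' : count (fun st : step => st.1 != 0) q = size q by lia.
move=> st hst; split.
  by rewrite lt0n; apply: (count_allS hA').
by apply/eqP; have := count_all0 hR hst; rewrite negbK.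
Qed.

Lemma nadd_phi (p q : seq step) k i : size p = size q -> (forall st, st \in p -> 1 <= st.2) ->
  n_add (phi p q) k i = n_add p k i.+1.
Proof.
move=> hs hp; rewrite /n_add (count_phi_snd k (fun x => x == i) hs).
apply: eq_in_count => st /mem_take /hp /=; case: st.2 => //.
Qed.

Lemma nrem_phi (p q : seq step) k i : size p = size q -> (forall st, st \in q -> 1 <= st.1) ->
  n_rem (phi p q) k i = n_rem q k i.+1.
Proof.
move=> hs hq; rewrite /n_rem (count_phi_fst k (fun x => x == i) hs).
apply: eq_in_count => st /mem_take /hq /=; case: st.1 => //.
Qed.

Lemma nrem0 (p : seq step) k r : 1 <= r -> (forall st, st \in p -> st.1 = 0) -> n_rem p k r = 0.
Proof.
move=> hr hp; rewrite /n_rem; apply/eqP; rewrite -leqn0 leqNgt -has_count; apply/hasP => -[st /mem_take /hp h].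
move: hr; rewrite h /=; lia.
Qed.

Lemma nadd0 (p : seq step) k r : 1 <= r -> (forall st, st \in p -> st.2 = 0) -> n_add p k r = 0.
Proof.
move=> hr hp; rewrite /n_add; apply/eqP; rewrite -leqn0 leqNgt -has_count; apply/hasP => -[st /mem_take /hp h].
move: hr; rewrite h /=; lia.
Qed.

Record domF (n s : nat) (la nu al : seq nat) (p q : seq step) : Prop := DomF {
  dp : forall st, st \in p -> st.1 = 0 /\ 1 <= st.2;
  dq : forall st, st \in q -> 1 <= st.1 /\ st.2 = 0;
  dsp : size p = s;
  dsq : size q = s;
  dA : forall i, row al i.+1 + At (phi p q) i = row (part_n n nu) i.+1;
  dC : forall i, row al i.+1 + Ct (phi p q) i = row (part_n n la) i.+1
}.

Lemma dom_facts n s la nu al p q : sumn la <= n -> sumn nu <= n -> s <= n ->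
  phi_dom n s la nu (al, p, q) -> domF n s la nu al p q.
Proof.
move=> hla hnu hsn [hal hsal hcont hP hQ].
have hp := shape_p hP hsal (sumn_pn hnu) hsn.
have hq := shape_q hQ (sumn_pn hla) hsal hsn.
have [_ hsp _ hfp] := hP; have [_ hsq _ hfq] := hQ.
have hs : size p = size q by rewrite hsp hsq.
split => // i.
  have := hfp i.+1 (ltn0Sn _); rewrite /shape_at (@nrem0 p _ i.+1 (ltn0Sn _)); last by move=> st /hp [].
  rewrite -hsp /At.
  have -> : count (fun st : step => st.2 == i) (phi p q) = n_add (phi p q) (size (phi p q)) i.
    by rewrite /n_add take_size.
  rewrite nadd_phi //; last by move=> st /hp [].
  by rewrite size_phi -hs minnn; lia.
have := hfq i.+1 (ltn0Sn _); rewrite /shape_at (@nadd0 q _ i.+1 (ltn0Sn _)); last by move=> st /hq [].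
rewrite -hsq /Ct.
have -> : count (fun st : step => st.1 == i) (phi p q) = n_rem (phi p q) (size (phi p q)) i.
  by rewrite /n_rem take_size.
rewrite nrem_phi //; last by move=> st /hq [].
rewrite size_phi hs minnn; lia.
Qed.

Lemma dom_final n s la nu al p q : domF n s la nu al p q ->
  [/\ size (phi p q) = s,
   (forall i, 1 <= i -> shape_at la (phi p q) (size (phi p q)) i = Posz (row nu i)),
   (forall i, 1 <= i -> Ct (phi p q) i <= row la i) &
   (forall i, 1 <= i -> row al i.+1 + Ct (phi p q) i = row la i)].
Proof.
case=> hp hq hsp hsq hA hC; split.
- by rewrite size_phi hsp hsq minnn.
- move=> i hi; rewrite /shape_at /n_add /n_rem take_size.
  have := hA i; have := hC i; rewrite !row_pnS // /At /Ct; lia.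
- by move=> i hi; have := hC i; rewrite row_pnS //; lia.
- by move=> i hi; have := hC i; rewrite row_pnS.
Qed.

Lemma phi_stdplus n s la nu al p q : is_part la -> is_part nu -> coPieri la nu s ->
  domF n s la nu al p q -> is_part al -> Std_plus s la nu (phi p q).
Proof.
move=> hla hnu [hsum _ hcase] D hal.
have [hs hfin hc hrel] := dom_final D.
case: hcase => [s1|[s2 hg]].
  rewrite s1 in hs hsum *; split; last by move=> i hi; apply: hc.
  apply: std1 => //.
  apply: ipr_ext (part_rows_shift hal) => i hi.
  by rewrite -(hrel i hi); lia.
by apply: (stdplus_perm hg hsum hs hfin hc (perm_refl _)).
Qed.

Lemma phi_inj n s la nu x y : sumn la <= n -> sumn nu <= n -> s <= n ->
  phi_dom n s la nu x -> phi_dom n s la nu y -> phi x.1.2 x.2 = phi y.1.2 y.2 -> x = y.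
Proof.
move=> hla hnu hsn; case: x => [[al p] q]; case: y => [[al' p'] q'] /= hx hy e.
have D := dom_facts hla hnu hsn hx; have D' := dom_facts hla hnu hsn hy.
have [hp hq hsp hsq _ _] := D; have [hp' hq' hsp' hsq' _ _] := D'.
have hnth : forall i, i < s -> nth (0,0) (phi p q) i = nth (0,0) (phi p' q') i by move=> i _; rewrite e.
have hs1 : size p = size q by rewrite hsp hsq.
have hs2 : size p' = size q' by rewrite hsp' hsq'.
have ep : p = p'.
  apply: (eq_from_nth (x0 := (0,0))); first by rewrite hsp hsp'.
  move=> i hi; have hi' : i < s by rewrite -hsp.
  have := hnth i hi'; rewrite (nth_phi hs1 hi) (nth_phi hs2); last by rewrite hsp'.
  have := hp _ (mem_nth (0,0) hi).
  have : i < size p' by rewrite hsp'.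
  move=> /(mem_nth (0,0)) /hp'.
  case: (nth _ p' i) => a' b'; case: (nth _ p i) => a b /= [-> h1] [-> h2] [_ h3].
  by congr pair; lia.
have eq' : q = q'.
  apply: (eq_from_nth (x0 := (0,0))); first by rewrite hsq hsq'.
  move=> i hi; have hi' : i < s by rewrite -hsq.
  have hip : i < size p by rewrite hsp.
  have := hnth i hi'; rewrite (nth_phi hs1 hip) (nth_phi hs2); last by rewrite hsp'.
  have := hq _ (mem_nth (0,0) hi).
  have : i < size q' by rewrite hsq'.
  move=> /(mem_nth (0,0)) /hq'.
  case: (nth _ q' i) => a' b'; case: (nth _ q i) => a b /= [h1 ->] [h2 ->] [h3 _].
  by congr pair; lia.
subst p' q'.
have [hal _ _ _ [_ _ _ hf]] := hx; have [hal' _ _ _ [_ _ _ hf']] := hy.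
congr (_, _, _); apply: part_eq => // j.
have := hf j.+1 (ltn0Sn _); have := hf' j.+1 (ltn0Sn _); rewrite /row /= => -> [].
by [].
Qed.

Lemma prepend (g h : nat -> int) (x : int) : is_partition_rows g -> (0 <= x)%R -> (g 1%N <= x)%R ->
  h 1%N = x -> (forall i, 1 <= i -> h i.+1 = g i) -> is_partition_rows h.
Proof.
move=> hg hx hg1 h1 hS [|[|j]] // _.
  by rewrite h1 hS.
rewrite !hS //; exact: hg.
Qed.

Definition pmk (u : seq step) : seq step := map (fun st : step => (0, st.2.+1)) u.
Definition qmk (u : seq step) : seq step := map (fun st : step => (st.1.+1, 0)) u.

Lemma phi_pq u : phi (pmk u) (qmk u) = u.
Proof. by elim: u => [|[a b] u IH] //=; rewrite /phi /= in IH *; rewrite IH. Qed.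

Lemma nadd_p u k r : n_add (pmk u) k r.+1 = n_add u k r.
Proof. by rewrite /n_add /pmk -map_take count_map. Qed.
Lemma nrem_p u k r : n_rem (pmk u) k r.+1 = 0.
Proof. by rewrite /n_rem /pmk -map_take count_map; apply/eqP; rewrite -leqn0 leqNgt -has_count; apply/hasP => -[]. Qed.
Lemma nrem_q u k r : n_rem (qmk u) k r.+1 = n_rem u k r.
Proof. by rewrite /n_rem /qmk -map_take count_map. Qed.
Lemma nadd_q u k r : n_add (qmk u) k r.+1 = 0.
Proof. by rewrite /n_add /qmk -map_take count_map; apply/eqP; rewrite -leqn0 leqNgt -has_count; apply/hasP => -[]. Qed.

Lemma cnt_split1 (t : seq step) :
  count (fun st : step => st.1 == 0) t + count (fun st : step => st.1 != 0) t = size t.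
Proof. exact: count_predC. Qed.
Lemma cnt_split2 (t : seq step) :
  count (fun st : step => st.2 == 0) t + count (fun st : step => st.2 != 0) t = size t.
Proof. exact: count_predC. Qed.

Lemma surj n s la nu u : is_part la -> is_part nu -> coPieri la nu s ->
  2 * (sumn la + sumn nu) + s <= n ->
  Std_plus s la nu u -> exists x, phi_dom n s la nu x /\ phi x.1.2 x.2 = u.
Proof.
move=> hla hnu [hsum _ hcase] hn [hstd hcnt].
have [_ hs hsh hfin0] := hstd.
have hfin : forall i, 1 <= i -> shape_at la u (size u) i = Posz (row nu i) by rewrite hs.
have hc : forall i, 1 <= i -> Ct u i <= row la i by [].
have hf := final_nat hfin.
have hl1 := row1_le la; have hn1 := row1_le nu.
have hl1' : nth 0 la 0 <= sumn la := hl1.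
have hn1' : nth 0 nu 0 <= sumn nu := hn1.
have hC0 : Ct u 0 <= s by rewrite -hs count_size.
have hA0 : At u 0 <= s by rewrite -hs count_size.
have HLC : is_partition_rows (fun i => (Posz (row la i) - Posz (Ct u i))%R).
  case: hcase => [s1|[s2 hg]].
    have := (hsh 1 (introT andP (conj (isT : 0 < 1) (eq_leq (esym s1))))).1.
    apply: ipr_ext => i hi; rewrite /shape_half /n_add /n_rem take0 /= -s1 -hs take_size.
    by rewrite /Ct addr0.
  have hv := VT_of hg hs hfin hc.
  apply: ipr_ext (hv (fun _ => 0) (Ct u) _ _) => // i hi; by rewrite addr0.
have Qf : forall k, 1 <= k <= s -> is_partition_rows (fun i => (Posz (row la i) - Posz (n_rem u k i))%R).
  case: hcase => [s1|[s2 hg]] k hk.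
    have -> : k = size u by rewrite hs s1; lia.
    by apply: ipr_ext HLC => i hi; rewrite /n_rem take_size.
  have hv := VT_of hg hs hfin hc.
  apply: ipr_ext (hv (fun _ => 0) (n_rem u k) _ _) => // i hi; first by rewrite addr0.
  exact: nrem_le.
have Pf : forall k, k <= s -> is_partition_rows (fun i => (Posz (row la i - Ct u i) + Posz (n_add u k i))%R).
  case: hcase => [s1|[s2 hg]] k hk.
    case: k hk => [|k] hk.
      by apply: ipr_ext HLC => i hi; rewrite /n_add take0 /= addr0; have := hc i hi; lia.
    have -> : k.+1 = size u by rewrite hs s1; lia.
    apply: ipr_ext (part_rows hnu) => i hi; rewrite /n_add take_size.
    by have := hf i hi; have := hc i hi; rewrite /At; lia.
  have hv := VT_of hg hs hfin hc.
  apply: ipr_ext (hv (n_add u k) (Ct u) _ _) => // i hi; last exact: nadd_le.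
  by have := hc i hi; lia.
pose rr (i : nat) := if i is i'.+1 then row la i'.+1 - Ct u i'.+1 else n - sumn la - Ct u 0.
have rrd : forall i, rr i.+1 <= rr i.
  case=> [|i] /=; first by lia.
  have := HLC i.+1 (ltn0Sn _); have := hc i.+1 (ltn0Sn _); have := hc i.+2 (ltn0Sn _); lia.
have rrM : rr (size la).+1 = 0.
  by rewrite /= /row /= nth_default.
have [hal hnal] := mkp_spec rrd rrM.
set al := mkp rr (size la).+1 in hal hnal.
have hrow : forall j, row al j.+1 = rr j by move=> j; rewrite /row /= hnal.
set p := pmk u; set q := qmk u.
have hid : sumn nu + At u 0 = sumn la + Ct u 0.
  have := ID hfin.
  have e1 := cnt_split1 u; have e2 := cnt_split2 u.
  rewrite /Ct /At; lia.
have hsq : size q = s by rewrite size_map.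
have hsp : size p = s by rewrite size_map.
have qfin : forall i, 1 <= i -> shape_at (part_n n la) q s i = Posz (row al i).
  case=> [|[|j]] // _; rewrite /shape_at nadd_q nrem_q hrow -hs /n_rem take_size /=.
    rewrite -/(Ct u 0) row_pn1; lia.
  by rewrite -/(Ct u j.+1) row_pnS //; have := hc j.+1 (ltn0Sn _); lia.
have hsal : sumn al = n - s.
  have := ID (t := q) (la := part_n n la) (nu := al); rewrite hsq => /(_ qfin).
  rewrite sumn_pn; last by lia.
  have -> : count (fun st : step => st.1 != 0) q = s by rewrite /q /qmk count_map -hs; apply/eqP; rewrite -all_count; apply/allP.
  have -> : count (fun st : step => st.2 != 0) q = 0.
    by rewrite /q /qmk count_map; apply/eqP; rewrite -leqn0 leqNgt -has_count; apply/hasP => -[].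
  lia.
exists (al, p, q); split; last exact: phi_pq.
split => //.
- move=> i; rewrite nth_pmeet hnal.
  case: i => [|i].
    by rewrite /= leq_min; apply/andP; split; lia.
  have := hf i.+1 (ltn0Sn _); have := hc i.+1 (ltn0Sn _); rewrite /= leq_min /row /= => h1 h2.
  by apply/andP; split; lia.
- split => //; first by rewrite sumn_pn; lia.
  + move=> k hk.
    have gen : forall k', k' <= s -> is_partition_rows (fun i => shape_at al p k' i + 0)%R.
      move=> k' hk'.
      apply: (prepend (Pf k' hk') (x := Posz (rr 0 + n_add u k' 0))) => //.
        have := nadd_le u k' 1; have := hf 1 (isT : 0 < 1); have := hc 1 (isT : 0 < 1); rewrite /rr /= /At; lia.
      - by rewrite addr0 /shape_at nadd_p nrem_p hrow /rr /=; lia.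
      - move=> i hi; rewrite addr0 /shape_at nadd_p nrem_p hrow /=.
        by case: i hi => // i _; rewrite /rr; lia.
    split.
      apply: ipr_ext (gen k.-1 _) => [i hi|]; last by lia.
      rewrite addr0 /shape_at /shape_half; case: i hi => // i _; rewrite !nrem_p //.
    by apply: ipr_ext (gen k _) => [i hi|]; [rewrite addr0|lia].
  + case=> [|[|j]] // _; rewrite /shape_at nadd_p nrem_p hrow -hs /n_add take_size /=.
      by rewrite -/(At u 0) /rr row_pn1; lia.
    by rewrite -/(At u j.+1) /rr row_pnS //; have := hf j.+1 (ltn0Sn _); have := hc j.+1 (ltn0Sn _); rewrite /At /Ct; lia.
- split => //; first by rewrite hsal sumn_pn; lia.
  move=> k hk.
  have g : is_partition_rows (fun i => shape_at (part_n n la) q k i).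
    apply: (prepend (Qf k hk) (x := (Posz (n - sumn la) - Posz (n_rem u k 0))%R)).
    + have := nrem_le u k 0; lia.
    + have := nrem_le u k 0; have := nrem_le u k 1; rewrite /=; lia.
    + by rewrite /shape_at nadd_q nrem_q row_pn1 addr0.
    + move=> i hi; rewrite /shape_at nadd_q nrem_q row_pnS //; lia.
  split => //.
  apply: ipr_ext g => i hi; rewrite /shape_at /shape_half; case: i hi => // i _.
  by rewrite !nadd_q.
Qed.

Lemma dom_counts n s la nu al p q : domF n s la nu al p q ->
  (forall r, At (phi p q) r = At p r.+1) /\ (forall r, Ct (phi p q) r = Ct q r.+1).
Proof.
case=> hp hq hsp hsq _ _; have hs : size p = size q by rewrite hsp hsq.
have hsu : size (phi p q) = size p by rewrite size_phi hs minnn.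
split => r.
  rewrite /At -(take_size (phi p q)) -/(n_add (phi p q) (size (phi p q)) r) nadd_phi //.
    by rewrite /n_add hsu take_size.
  by move=> st /hp [].
rewrite /Ct -(take_size (phi p q)) -/(n_rem (phi p q) (size (phi p q)) r) nrem_phi //.
  by rewrite /n_rem hsu hs take_size.
by move=> st /hq [].
Qed.

Lemma al_first n s la nu al : is_part al -> sumn al = n - s ->
  pcontained al (pmeet (part_n n la) (part_n n nu)) -> n - s - sumn la <= row al 1.
Proof.
move=> _ hs hc.
have : sumn (behead al) <= sumn la.
  apply: sumn_le_nth => j; rewrite nth_behead; apply: leq_trans (hc j.+1) _.
  by rewrite nth_pmeet geq_minl.
have : sumn al = nth 0 al 0 + sumn (behead al) by case: al {hc hs}.
rewrite /row /=; lia.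
Qed.

Lemma p_ok (la nu al : seq nat) (u : seq step) (a : nat -> nat) : VTprop la u ->
  (forall i, 1 <= i -> row al i.+1 + Ct u i = row la i) ->
  (forall i, 1 <= i -> row nu i + Ct u i = row la i + At u i) ->
  (forall i, 1 <= i -> Ct u i <= row la i) ->
  row nu 1 <= row al 1 -> (forall r, a r.+1 <= At u r) ->
  is_partition_rows (fun r => (Posz (row al r) + Posz (a r))%R).
Proof.
move=> hv hrel hf hc hal1 ha.
apply: (prepend (hv (fun i => a i.+1) (Ct u) (fun i _ => ha i) (fun i _ => leqnn _))
          (x := (Posz (row al 1) + Posz (a 1%N))%R)) => //.
  have := ha 1%N; have := hf 1%N isT; have := hc 1%N isT; rewrite /=; lia.
move=> i hi /=; have := hrel i hi; have := hc i hi; lia.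
Qed.

Lemma q_ok (la : seq nat) (u : seq step) n (c : nat -> nat) : VTprop la u ->
  (forall r, c r.+1 <= Ct u r) -> c 1%N + row la 1%N + sumn la <= n ->
  is_partition_rows (fun r => (Posz (row (part_n n la) r) - Posz (c r))%R).
Proof.
move=> hv hc h1.
apply: (prepend (hv (fun _ => 0) (fun i => c i.+1) (fun i _ => leq0n _) (fun i _ => hc i))
          (x := (Posz (n - sumn la) - Posz (c 1%N))%R)) => //.
- lia.
- rewrite /=; lia.
- move=> i hi /=; rewrite row_pnS //; lia.
Qed.

Lemma swap_part n s la nu al p q k : is_part la -> is_part nu -> coPieri la nu s ->
  2 * (sumn la + sumn nu) + s <= n -> phi_dom n s la nu (al, p, q) -> 1 <= k <= s - 1 ->
  [/\ Std s al (part_n n nu) (swap_steps k p),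
      Std s (part_n n la) al (swap_steps k q),
      phi (swap_steps k p) (swap_steps k q) = swap_steps k (phi p q)
    & Std_plus s la nu (swap_steps k (phi p q))].
Proof.
move=> hla hnu [hsum _ hcase] hn hx /andP[hk1 hk2].
have hs2 : 1 < s by lia.
have hg : gapc la nu s by case: hcase => [s1|[_ h]] //; lia.
have hl1 := row1_le la; have hn1 := row1_le nu.
have D := dom_facts (ltac:(lia) : sumn la <= n) (ltac:(lia) : sumn nu <= n) (ltac:(lia) : s <= n) hx.
have [hsu hfin hc hrel] := dom_final D.
have [hAu hCu] := dom_counts D.
have hv := VT_of hg hsu hfin hc.
have hf := final_nat hfin.
have [hp hq hsp hsq _ _] := D.
have [hal hsal hcont hP hQ] := hx.
have hal1 : row nu 1 <= row al 1 by have := al_first hal hsal hcont; lia.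
have hkp : k < size p by lia.
have hkq : k < size q by lia.
have hku : k < size (phi p q) by lia.
split.
- set p' := swap_steps k p.
  have hperm : perm_eq p' p := perm_swap hk1 hkp.
  have hp' : forall st, st \in p' -> st.1 = 0 by move=> st; rewrite (perm_mem hperm) => /hp [].
  have gen : forall kk, is_partition_rows (fun r => shape_at al p' kk r).
    move=> kk; apply: ipr_ext (p_ok (a := fun r => n_add p' kk r) hv hrel hf hc hal1 _).
      by move=> r hr; rewrite /shape_at (nrem0 _ hr hp') subr0.
    move=> r; rewrite hAu -(At_perm _ hperm); exact: nadd_le.
  have [h1 _ _ hfp] := hP.
  split => //; first by rewrite size_swap.
    move=> kk hkk; split => //.
    apply: ipr_ext (gen kk.-1) => r hr; rewrite /shape_at /shape_half; by rewrite !(nrem0 _ hr hp').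
  have := final_perm (la := al) (nu := part_n n nu) hperm; rewrite hsp => /(_ hfp).
  by rewrite size_swap // hsp.
- set q' := swap_steps k q.
  have hperm : perm_eq q' q := perm_swap hk1 hkq.
  have hq' : forall st, st \in q' -> st.2 = 0 by move=> st; rewrite (perm_mem hperm) => /hq [].
  have gen : forall kk, is_partition_rows (fun r => shape_at (part_n n la) q' kk r).
    move=> kk; apply: ipr_ext (q_ok (c := fun r => n_rem q' kk r) hv _ _).
    + by move=> r hr; rewrite /shape_at (nadd0 _ hr hq') addr0.
    + move=> r; rewrite hCu -(Ct_perm _ hperm); exact: nrem_le.
    + have := nrem_le q' kk 1; have := count_size (fun st : step => st.1 == 1%N) q'.
      rewrite size_swap // hsq /Ct; lia.
  have [h1 _ _ hfq] := hQ.
  split => //; first by rewrite size_swap.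
    move=> kk hkk; split => //.
    apply: ipr_ext (gen kk) => r hr; rewrite /shape_at /shape_half; by rewrite !(nadd0 _ hr hq').
  have := final_perm (la := part_n n la) (nu := al) hperm; rewrite hsq => /(_ hfq).
  by rewrite size_swap // hsq.
- apply: phi_swap => //; by rewrite hsp hsq.
- apply: (stdplus_perm hg hsum hsu hfin hc); exact: perm_swap.
Qed.

End Helpers.


Theorem lemma4p20 (la nu : seq nat) (s : nat) :
  is_part la -> is_part nu -> coPieri la nu s ->
  exists N : nat, forall n : nat, (N <= n)%N ->
  (* shape of the elements of Std_s(nu_[n] \ alpha) and Std_s(alpha \ la_[n]) *)
      (forall al, is_part al -> sumn al = (n - s)%N ->
         pcontained al (pmeet (part_n n la) (part_n n nu)) ->
         (forall p, Std s al (part_n n nu) p ->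
            forall st, st \in p -> st.1 = 0%N /\ (1 <= st.2)%N) /\
         (forall q, Std s (part_n n la) al q ->
            forall st, st \in q -> (1 <= st.1)%N /\ st.2 = 0%N)) /\
      (* phi_s maps the disjoint union into Std^+_s(nu \ la) ... *)
      (forall x, phi_dom n s la nu x -> Std_plus s la nu (phi x.1.2 x.2)) /\
      (* ... injectively ... *)
      (forall x y, phi_dom n s la nu x -> phi_dom n s la nu y ->
         phi x.1.2 x.2 = phi y.1.2 y.2 -> x = y) /\
      (* ... and surjectively *)
      (forall u, Std_plus s la nu u ->
         exists x, phi_dom n s la nu x /\ phi x.1.2 x.2 = u) /\
      (* compatibility with interchanging consecutive integral steps *)
      (forall al p q, phi_dom n s la nu (al, p, q) ->
         forall k, (1 <= k <= s - 1)%N ->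
         [/\ Std s al (part_n n nu) (swap_steps k p),
             Std s (part_n n la) al (swap_steps k q),
             phi (swap_steps k p) (swap_steps k q) = swap_steps k (phi p q)
           & Std_plus s la nu (swap_steps k (phi p q))]) /\
      (* hence u_{k<->k+1} exists for u in Std^0_s(nu \ la) *)
      (forall u, Std_zero s la nu u ->
         forall k, (1 <= k <= s - 1)%N -> Std s la nu (swap_steps k u)).
Proof.
move=> hla hnu hcp.
exists (2 * (sumn la + sumn nu) + s) => n hn.
have hln : (sumn la <= n)%N by lia.
have hnn : (sumn nu <= n)%N by lia.
have hsn : (s <= n)%N by lia.
split.
  move=> al hal hsal hcont; split.
    by move=> p hP; apply: (Helpers.shape_p hP hsal (Helpers.sumn_pn hnn) hsn).
  by move=> q hQ; apply: (Helpers.shape_q hQ (Helpers.sumn_pn hln) hsal hsn).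
split.
  case=> [[al p] q] hx /=.
  apply: (Helpers.phi_stdplus hla hnu hcp (Helpers.dom_facts hln hnn hsn hx)).
  by case: hx.
split.
  by move=> x y; apply: Helpers.phi_inj.
split.
  by move=> u hu; apply: Helpers.surj.
split.
  by move=> al p q hx k hk; apply: Helpers.swap_part.
move=> u [[hu hcnt] _] k /andP[hk1 hk2].
have [hsum _ hcase] := hcp.
have hg : Helpers.gapc la nu s by case: hcase => [s1|[_ h]] //; lia.
have [_ hs _ hfin0] := hu.
have hfin : forall i, (1 <= i)%N -> shape_at la u (size u) i = Posz (Defs.row nu i) by rewrite hs.
have hp := Helpers.perm_swap (t := u) hk1 (ltac:(lia) : (k < size u)%N).
by have [] := Helpers.stdplus_perm hg hsum hs hfin hcnt hp.
Qed.
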